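(* Let $M$ be $\mathbb R^n$ or a compact rank-one symmetric space, and for $r>0$ let $h_r$ be the solution of $h_r''(h_r')^{n-1}=e^{h_r}\mathcal D_M(u)$ on $[0,r)$ with $\lim_{u\to r}h_r(u)=\infty$. Put $a_r=h_r(0)=\inf_{[0,r)}h_r$. Then $r\mapsto a_r$ is decreasing and $\lim_{r\to\infty}a_r=-\infty$.
   Context: $n\ge2$ is the real dimension of $M$; $u=\sqrt\rho$, $\rho(x,v)=4|v|^2$ on $TM$ with the adapted complex structure (defined on all of $TM$ in these cases). $\mathcal D_M(u)=u^{n-1}$ for $\mathbb R^n$; $(\sinh u)^{n-1}$ for the round sphere and real projective space; $2^{n-1}(\cosh\frac u2)^k(\sinh\frac u2)^{n-1}$, $k=1,3,7$, for complex projective space, quaternionic projective space, Cayley plane. Solutions are real-analytic in $u^2$ (so $h_r'(0)=0$). *)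

(* Defs.v *)
From Stdlib Require Import Reals Lra.
Open Scope R_scope.

Inductive ModelSpace : Set :=
  | Euclid
  | Sphere
  | RealProj
  | ComplexProj
  | QuatProj
  | CayleyPlane .

Definition valid_dim (M : ModelSpace) (n : nat) : Prop :=
  match M with
  | Euclid | Sphere | RealProj => (2 <= n)%nat
  | ComplexProj => exists m, (1 <= m)%nat /\ n = (2 * m)%nat
  | QuatProj => exists m, (1 <= m)%nat /\ n = (4 * m)%nat
  | CayleyPlane => n = 16%nat
  end.

Definition DM (M : ModelSpace) (n : nat) (u : R) : R :=
  match M with
  | Euclid => u ^ (n - 1)
  | Sphere | RealProj => (sinh u) ^ (n - 1)
  | ComplexProj => 2 ^ (n - 1) * (cosh (u / 2)) ^ 1 * (sinh (u / 2)) ^ (n - 1)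
  | QuatProj => 2 ^ (n - 1) * (cosh (u / 2)) ^ 3 * (sinh (u / 2)) ^ (n - 1)
  | CayleyPlane => 2 ^ (n - 1) * (cosh (u / 2)) ^ 7 * (sinh (u / 2)) ^ (n - 1)
  end.

(* h is a solution of h''(h')^{n-1} = e^h D_M(u) on [0,r), with h1, h2 its
   first and second derivatives (differentiable on (-r,r), as h is real-analytic
   in u^2, so in particular h'(0) = 0), and h(u) -> +infinity as u -> r^-. *)
Definition blowup_solution (M : ModelSpace) (n : nat) (r : R)
    (h h1 h2 : R -> R) : Prop :=
  (forall u, -r < u < r -> derivable_pt_lim h u (h1 u)) /\
  (forall u, -r < u < r -> derivable_pt_lim h1 u (h2 u)) /\
  h1 0 = 0 /\
  (forall u, 0 <= u < r -> h2 u * (h1 u) ^ (n - 1) = exp (h u) * DM M n u) /\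
  (forall K, exists d, 0 < d /\ forall u, r - d < u < r -> K < h u).

(* Main.v *)
Require Import Defs.
From Stdlib Require Import Reals Lra Lia Ranalysis5.
Open Scope R_scope.

Lemma cont_ind (f : R -> R) (a b c : R) :
  a <= b -> (forall x, a <= x <= b -> continuity_pt f x) -> c < f a ->
  (forall x, a < x <= b -> (forall t, a <= t < x -> c < f t) -> c < f x) ->
  forall x, a <= x <= b -> c < f x.
Proof.
  intros Hab Hc Ha Hstep.
  set (E := fun x => a <= x <= b /\ forall t, a <= t <= x -> c < f t).
  assert (HB : bound E). { exists b. intros x [Hx _]. lra. }
  assert (HE : exists x, E x). { exists a. split. lra. intros t Ht. replace t with a by lra. exact Ha. }
  destruct (completeness E HB HE) as [y [Hub Hlub]].
  assert (Hay : a <= y). { apply Hub. split. lra. intros t Ht. replace t with a by lra. exact Ha. }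
  assert (Hyb : y <= b). { apply Hlub. intros x [Hx _]. lra. }
  assert (C1 : forall t, a <= t < y -> c < f t).
  { intros t Ht. destruct (Rlt_le_dec c (f t)) as [H|H]; [exact H|].
    exfalso. assert (y <= t). { apply Hlub. intros x [Hx Hx2].
      destruct (Rle_lt_dec x t) as [H1|H1]; [exact H1|]. exfalso.
      assert (c < f t) by (apply Hx2; lra). lra. } lra. }
  assert (C2 : c < f y).
  { destruct (Req_dec y a) as [->|Hne]; [exact Ha|]. apply Hstep. lra. exact C1. }
  pose proof (Hc y (conj Hay Hyb)) as Hcy.
  unfold continuity_pt, continue_in, limit1_in, limit_in in Hcy. simpl in Hcy.
  destruct (Hcy (f y - c)) as [alp [Halp Hal]]; [lra|].
  assert (C3 : forall t, Rabs (t - y) < alp -> c < f t).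
  { intros t Ht. destruct (Req_dec t y) as [->|Hne]; [exact C2|].
    assert (R_dist (f t) (f y) < f y - c) by (apply Hal; split; [split; [exact I|auto]| exact Ht]).
    unfold R_dist in H. apply Rabs_def2 in H. lra. }
  assert (Hyb2 : y = b).
  { destruct (Req_dec y b) as [H|H]; [exact H|]. exfalso.
    set (z := Rmin b (y + alp/2)).
    assert (Hz1 : y < z). { unfold z. apply Rmin_glb_lt; lra. }
    assert (Hz2 : z <= b) by apply Rmin_l.
    assert (Hz3 : z <= y + alp/2) by apply Rmin_r.
    assert (E z). { split. lra. intros t Ht.
      destruct (Rlt_le_dec t y). apply C1; lra.
      apply C3. rewrite Rabs_right; lra. }
    assert (z <= y) by (apply Hub; auto). lra. }
  intros x Hx. destruct (Req_dec x b) as [->|Hne].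
  rewrite <- Hyb2. exact C2. apply C1. lra.
Qed.

Lemma pow_lt_S (x y : R) (k : nat) : 0 <= x < y -> x ^ S k < y ^ S k.
Proof.
  intros [Hx Hxy]. induction k as [|k IH].
  - simpl. lra.
  - change (x * x ^ S k < y * y ^ S k).
    assert (0 <= x ^ S k) by (apply pow_le; lra).
    apply Rle_lt_trans with (x * y ^ S k).
    apply Rmult_le_compat_l; lra. apply Rmult_lt_compat_r. apply pow_lt; lra. lra.
Qed.

Lemma dpow (f : R -> R) (x l : R) (k : nat) :
  derivable_pt_lim f x l ->
  derivable_pt_lim (fun t => f t ^ k) x (INR k * f x ^ pred k * l).
Proof.
  intros H. change (fun t => f t ^ k) with (comp (fun y => y ^ k) f).
  apply derivable_pt_lim_comp; [exact H|]. apply derivable_pt_lim_pow.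
Qed.

Lemma dcont f x l : derivable_pt_lim f x l -> continuity_pt f x.
Proof. intros H. apply (derivable_continuous_pt f x (exist _ l H)). Qed.

Lemma nondecr (f f' : R -> R) (a x : R) :
  a <= x -> (forall c, a <= c <= x -> derivable_pt_lim f c (f' c)) ->
  (forall c, a < c < x -> 0 <= f' c) -> f a <= f x.
Proof.
  intros Hax Hd Hp. destruct (Req_dec a x) as [->|Hne]; [lra|].
  destruct (MVT_cor2 f f' a x) as [c [Hc1 Hc2]]; [lra|exact Hd|].
  assert (0 <= f' c * (x - a)) by (apply Rmult_le_pos; [apply Hp; lra|lra]). lra.
Qed.

Lemma compare (P Q p1 q1 p2 q2 : R -> R) (m : nat) (b d : R) :
  0 <= b ->
  (forall u, 0 <= u <= b -> derivable_pt_lim P u (p1 u)) ->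
  (forall u, 0 <= u <= b -> derivable_pt_lim Q u (q1 u)) ->
  (forall u, 0 <= u <= b -> derivable_pt_lim p1 u (p2 u)) ->
  (forall u, 0 <= u <= b -> derivable_pt_lim q1 u (q2 u)) ->
  (forall u, 0 <= u <= b -> 0 <= p1 u) ->
  (forall u, 0 <= u <= b -> 0 <= q1 u) ->
  q1 0 <= p1 0 ->
  (forall u, 0 <= u <= b -> - d < P u - Q u -> q1 u ^ m * q2 u <= p1 u ^ m * p2 u) ->
  - d < P 0 - Q 0 ->
  forall u, 0 <= u <= b -> P 0 - Q 0 <= P u - Q u.
Proof.
  intros Hb dP dQ dp dq pp pq H0 Hkey Hd0.
  assert (Sub : forall x, 0 <= x <= b -> (forall t, 0 <= t < x -> - d < P t - Q t) ->
                 forall t, 0 <= t <= x -> P 0 - Q 0 <= P t - Q t).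
  { intros x Hx Hlt t Ht.
    assert (Hge : forall t, 0 <= t <= x -> q1 t <= p1 t).
    { intros s Hs.
      assert (HH : (fun y => p1 y ^ S m - q1 y ^ S m) 0 <= (fun y => p1 y ^ S m - q1 y ^ S m) s).
      { apply (nondecr (fun y => p1 y ^ S m - q1 y ^ S m) (fun y => INR (S m) * p1 y ^ pred (S m) * p2 y
                                       - INR (S m) * q1 y ^ pred (S m) * q2 y) 0 s).
        lra.
        intros c Hc. apply (derivable_pt_lim_minus (fun y => p1 y ^ S m) (fun y => q1 y ^ S m)).
        apply dpow, dp; lra. apply dpow, dq; lra.
        intros c Hc. simpl pred.
        assert (q1 c ^ m * q2 c <= p1 c ^ m * p2 c) by (apply Hkey; [lra| apply Hlt; lra]).
        assert (0 <= INR (S m)) by apply pos_INR. nra. }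
      simpl in HH.
      assert (q1 0 ^ S m <= p1 0 ^ S m) by (apply pow_incr; split; [apply pq; lra|exact H0]).
      destruct (Rle_lt_dec (q1 s) (p1 s)) as [Hq|Hq]; [exact Hq|].
      assert (p1 s ^ S m < q1 s ^ S m) by (apply pow_lt_S; split; [apply pp; lra|exact Hq]).
      simpl in *. lra. }
    assert (HW : (fun y => P y - Q y) 0 <= (fun y => P y - Q y) t).
    { apply (nondecr (fun y => P y - Q y) (fun y => p1 y - q1 y) 0 t). lra.
      intros c Hc. apply (derivable_pt_lim_minus P Q). apply dP; lra. apply dQ; lra.
      intros c Hc. assert (q1 c <= p1 c) by (apply Hge; lra). lra. }
    exact HW. }
  assert (All : forall x, 0 <= x <= b -> - d < P x - Q x).
  { apply (cont_ind (fun x => P x - Q x) 0 b (- d)); auto.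
    intros x Hx. apply (dcont _ _ (p1 x - q1 x)). apply (derivable_pt_lim_minus P Q).
    apply dP; lra. apply dQ; lra.
    intros x Hx Hlt. assert (P 0 - Q 0 <= P x - Q x) by (apply (Sub x); [lra|exact Hlt|lra]). lra. }
  intros u Hu. apply (Sub b). lra. intros t Ht. apply All; lra. exact Hu.
Qed.

Lemma solA (D : R -> R) (n : nat) (r : R) (h h1 h2 : R -> R) :
  (1 <= n)%nat -> (forall u, 0 < u -> 0 < D u) -> 0 < r ->
  (forall u, -r < u < r -> derivable_pt_lim h u (h1 u)) ->
  (forall u, -r < u < r -> derivable_pt_lim h1 u (h2 u)) ->
  h1 0 = 0 ->
  (forall u, 0 <= u < r -> h2 u * (h1 u) ^ (n - 1) = exp (h u) * D u) ->
  (forall K, exists d, 0 < d /\ forall u, r - d < u < r -> K < h u) ->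
  (forall u, 0 <= u < r -> 0 <= h1 u) /\ (forall x y, 0 <= x -> x <= y -> y < r -> h x <= h y).
Proof.
  intros Hn HD Hr dh dh1 H10 Heq Hbl.
  assert (Fpos : forall u, 0 < u < r -> h1 u <> 0).
  { intros u Hu Hz.
    destruct (MVT_cor2 (fun t => h1 t ^ n) (fun t => INR n * h1 t ^ pred n * h2 t) 0 u)
      as [c [Hc1 Hc2]]; [lra| |].
    intros c Hc. apply dpow, dh1; lra.
    rewrite Hz, H10 in Hc1. destruct n as [|k]; [lia|]. simpl pred in Hc1.
    rewrite pow_i in Hc1 by lia.
    assert (E : h2 c * h1 c ^ k = exp (h c) * D c) by (rewrite <- (Heq c) by lra; f_equal; f_equal; lia).
    assert (0 < exp (h c) * D c) by (apply Rmult_lt_0_compat; [apply exp_pos|apply HD; lra]).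
    assert (0 < INR (S k)) by (apply lt_0_INR; lia).
    assert (0 < INR (S k) * h1 c ^ k * h2 c * (u - 0)).
    { replace (INR (S k) * h1 c ^ k * h2 c * (u - 0)) with (INR (S k) * (h2 c * h1 c ^ k) * u) by ring.
      rewrite E. apply Rmult_lt_0_compat; [|lra]. apply Rmult_lt_0_compat; lra. }
    lra. }
  assert (Hcont : forall u, -r < u < r -> continuity_pt h1 u).
  { intros u Hu. apply (dcont _ _ (h2 u)). apply dh1; exact Hu. }
  assert (Hnn : forall u, 0 < u < r -> 0 < h1 u).
  { intros u0 Hu0. destruct (Rlt_le_dec 0 (h1 u0)) as [H|H]; [exact H|]. exfalso.
    assert (Hneg : h1 u0 < 0) by (pose proof (Fpos u0 Hu0); lra).
    assert (Hall : forall u, 0 < u < r -> h1 u < 0).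
    { intros u1 Hu1. destruct (Rlt_le_dec (h1 u1) 0) as [H1|H1]; [exact H1|].
      assert (Hp : 0 < h1 u1) by (pose proof (Fpos u1 Hu1); lra).
      exfalso. destruct (Rlt_le_dec u0 u1) as [Hl|Hl].
      - destruct (IVT_interv h1 u0 u1) as [z [Hz1 Hz2]]; auto.
        intros a Ha. apply Hcont; lra. apply (Fpos z); lra || auto.
      - destruct (Req_dec u0 u1) as [->|Hne]; [lra|].
        destruct (IVT_interv (fun t => - h1 t) u1 u0) as [z [Hz1 Hz2]]; auto; try lra.
        intros a Ha. apply continuity_pt_opp. apply Hcont; lra.
        apply (Fpos z). lra. lra. }
    assert (Hdec : forall u, 0 < u < r -> h u < h 0).
    { intros u Hu. destruct (MVT_cor2 h h1 0 u) as [c [Hc1 Hc2]]; [lra| |].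
      intros c Hc; apply dh; lra.
      assert (h1 c < 0) by (apply Hall; lra).
      assert (h1 c * (u - 0) < 0) by (apply Rmult_neg_pos; lra). lra. }
    destruct (Hbl (h 0)) as [d [Hd Hd2]].
    set (u := Rmax (r - d / 2) (r / 2)).
    assert (Hu1 : r - d/2 <= u) by apply Rmax_l.
    assert (Hu2 : r / 2 <= u) by apply Rmax_r.
    assert (Hu3 : u < r) by (apply Rmax_lub_lt; lra).
    assert (h 0 < h u) by (apply Hd2; lra).
    assert (h u < h 0) by (apply Hdec; lra). lra. }
  assert (Hge : forall u, 0 <= u < r -> 0 <= h1 u).
  { intros u Hu. destruct (Req_dec u 0) as [->|Hne]. lra. left; apply Hnn; lra. }
  split; [exact Hge|].
  intros x y Hx Hxy Hy. apply (nondecr h h1 x y). lra. intros c Hc; apply dh; lra.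
  intros c Hc. apply Hge; lra.
Qed.

Lemma sinh_nonneg x : 0 <= x -> 0 <= sinh x.
Proof. intros H. rewrite <- sinh_0. destruct (Req_dec x 0) as [->|]; [lra|]. left; apply sinh_lt; lra. Qed.
Lemma sinh_pos x : 0 < x -> 0 < sinh x.
Proof. intros H. rewrite <- sinh_0. apply sinh_lt; lra. Qed.
Lemma sinh_mono x y : x <= y -> sinh x <= sinh y.
Proof. intros H. destruct (Req_dec x y) as [->|]; [lra|]. left; apply sinh_lt; lra. Qed.
Lemma cosh_pos x : 0 < cosh x.
Proof. unfold cosh. pose proof (exp_pos x). pose proof (exp_pos (-x)). lra. Qed.
Lemma cosh_mono x y : 0 <= x -> x <= y -> cosh x <= cosh y.
Proof.
  intros Hx Hxy. apply (nondecr cosh sinh x y Hxy). intros c _; apply derivable_pt_lim_cosh.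
  intros c Hc. apply sinh_nonneg. lra.
Qed.

Lemma mono_mult (a b c d : R) : 0 <= a -> 0 <= c -> a <= b -> c <= d -> a * c <= b * d.
Proof. intros. apply Rmult_le_compat; auto. Qed.

Lemma DM_props (M : ModelSpace) (n : nat) :
  (forall u, 0 < u -> 0 < DM M n u) /\ (forall u, 0 <= u -> 0 <= DM M n u) /\
  (forall x y, 0 <= x -> x <= y -> DM M n x <= DM M n y).
Proof.
  assert (P2 : 0 < 2 ^ (n - 1)) by (apply pow_lt; lra).
  assert (Hc : forall k u, 0 <= u -> 0 < 2 ^ (n - 1) * cosh (u / 2) ^ k * sinh (u/2) ^ (n-1) \/ u = 0).
  { intros. destruct (Req_dec u 0); [right; auto|left].
    repeat apply Rmult_lt_0_compat; auto; apply pow_lt; [apply cosh_pos|apply sinh_pos; lra]. }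
  assert (Gen : forall k, (forall u, 0 < u -> 0 < 2 ^ (n - 1) * cosh (u / 2) ^ k * sinh (u/2) ^ (n-1))
     /\ (forall u, 0 <= u -> 0 <= 2 ^ (n - 1) * cosh (u / 2) ^ k * sinh (u/2) ^ (n-1))
     /\ (forall x y, 0 <= x -> x <= y -> 2 ^ (n - 1) * cosh (x / 2) ^ k * sinh (x/2) ^ (n-1)
                                  <= 2 ^ (n - 1) * cosh (y / 2) ^ k * sinh (y/2) ^ (n-1))).
  { intros k. split; [|split].
    - intros u Hu. repeat apply Rmult_lt_0_compat; auto; apply pow_lt; [apply cosh_pos|apply sinh_pos; lra].
    - intros u Hu. repeat apply Rmult_le_pos; try lra; apply pow_le; [left; apply cosh_pos|apply sinh_nonneg; lra].
    - intros x y Hx Hxy. apply mono_mult.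
      + apply Rmult_le_pos; [lra|apply pow_le; left; apply cosh_pos].
      + apply pow_le, sinh_nonneg; lra.
      + apply Rmult_le_compat_l; [lra|]. apply pow_incr. split; [left; apply cosh_pos|apply cosh_mono; lra].
      + apply pow_incr. split; [apply sinh_nonneg; lra|apply sinh_mono; lra]. }
  destruct M; unfold DM; try apply Gen.
  - split; [|split]. intros; apply pow_lt; lra. intros; apply pow_le; lra.
    intros; apply pow_incr; lra.
  - split; [|split]. intros; apply pow_lt, sinh_pos; lra. intros; apply pow_le, sinh_nonneg; lra.
    intros; apply pow_incr; split; [apply sinh_nonneg; lra|apply sinh_mono; lra].
  - split; [|split]. intros; apply pow_lt, sinh_pos; lra. intros; apply pow_le, sinh_nonneg; lra.
    intros; apply pow_incr; split; [apply sinh_nonneg; lra|apply sinh_mono; lra].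
Qed.

Lemma dscale (f : R -> R) (c t l : R) :
  derivable_pt_lim f (c * t) l -> derivable_pt_lim (fun x => f (c * x)) t (c * l).
Proof.
  intros H. change (fun x => f (c * x)) with (comp f (fun x => c * x)).
  rewrite Rmult_comm. apply derivable_pt_lim_comp; [|exact H].
  pose proof (derivable_pt_lim_scal id c t 1 (derivable_pt_lim_id t)) as D'.
  rewrite Rmult_1_r in D'. exact D'.
Qed.

Lemma dshift (f : R -> R) (c t l : R) :
  derivable_pt_lim f t l -> derivable_pt_lim (fun x => f x + c) t l.
Proof.
  intros H. replace l with (l + 0) by ring.
  exact (derivable_pt_lim_plus f (fct_cte c) t l 0 H (derivable_pt_lim_const c t)).
Qed.

Lemma pick_near (r d : R) : 0 < r -> 0 < d -> exists u, 0 < u /\ u < r /\ r - d < u.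
Proof.
  intros Hr Hd. exists (Rmax (r - d / 2) (r / 2)).
  pose proof (Rmax_l (r - d/2) (r/2)). pose proof (Rmax_r (r - d/2) (r/2)).
  split; [lra|split; [apply Rmax_lub_lt; lra|lra]].
Qed.

Theorem lemma3p1 (M : ModelSpace) (n : nat) (hn : valid_dim M n)
    (h h1 h2 : R -> R -> R)
    (Hsol : forall r, 0 < r -> blowup_solution M n r (h r) (h1 r) (h2 r)) :
  (forall r s, 0 < r -> r < s -> h s 0 < h r 0) /\
  (forall K, exists R0, forall r, R0 < r -> h r 0 < K).
Proof.
  assert (Hn : (1 <= n)%nat) by (destruct M; simpl in hn; try lia;
     destruct hn as [k [Hk ->]]; lia).
  unfold blowup_solution in Hsol.
  destruct (DM_props M n) as [DP1 [DP2 DP3]].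
  set (D := DM M n) in *.
  assert (SA : forall r, 0 < r -> (forall u, 0 <= u < r -> 0 <= h1 r u) /\
      (forall x y, 0 <= x -> x <= y -> y < r -> h r x <= h r y)).
  { intros r Hr. destruct (Hsol r Hr) as (dh & dh1 & H10 & Heq & Hbl).
    apply (solA D n r (h r) (h1 r) (h2 r)); auto. }
  destruct n as [|m]; [lia|]. replace (S m - 1)%nat with m in * by lia.
  split.
  - intros r s Hr Hrs.
    destruct (Rlt_le_dec (h s 0) (h r 0)) as [Hlt|Hge]; [exact Hlt|exfalso].
    assert (Hs : 0 < s) by lra.
    destruct (Hsol r Hr) as (dhr & dh1r & H10r & Heqr & Hblr).
    destruct (Hsol s Hs) as (dhs & dh1s & H10s & Heqs & Hbls).
    destruct (SA r Hr) as [Pr Mr]. destruct (SA s Hs) as [Ps Ms].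
    set (lam := (r + s) / (2 * r)).
    assert (Hlam : 1 < lam). { unfold lam. apply Rmult_lt_reg_r with (2 * r); [lra|]. field_simplify; lra. }
    assert (Hlr : lam * r < s). { unfold lam. field_simplify; lra. }
    assert (Hlp : 0 < lam ^ S (S m)) by (apply pow_lt; lra).
    set (del := ln (lam ^ S (S m))).
    assert (Hdel : 0 < del). { unfold del. rewrite <- ln_1. apply ln_increasing. lra.
      apply Rlt_pow_R1; [lra|lia]. }
    assert (Edel : exp del = lam ^ S (S m)) by (apply exp_ln; exact Hlp).
    destruct (Hblr (h s (lam * r))) as [d [Hd Hd2]].
    destruct (pick_near r d Hr Hd) as [u [Hu1 [Hu2 Hu3]]].
    assert (HK := Hd2 u (conj Hu3 Hu2)).
    assert (C := compare (fun t => h s (lam * t)) (h r) (fun t => lam * h1 s (lam * t)) (h1 r)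
       (fun t => lam * (lam * h2 s (lam * t))) (h2 r) m u del).
    assert (Hin : forall t, 0 <= t <= u -> - s < lam * t < s).
    { intros t Ht. assert (lam * t <= lam * u) by (apply Rmult_le_compat_l; lra).
      assert (lam * u < lam * r) by (apply Rmult_lt_compat_l; lra).
      assert (0 <= lam * t) by (apply Rmult_le_pos; lra). lra. }
    assert (C2 : h s (lam * 0) - h r 0 <= h s (lam * u) - h r u).
    { apply C; try lra.
      - intros t Ht. apply dscale. apply dhs. apply Hin; exact Ht.
      - intros t Ht. apply dhr. lra.
      - intros t Ht. apply (derivable_pt_lim_scal (fun t => h1 s (lam * t))).
        apply dscale. apply dh1s. apply Hin; exact Ht.
      - intros t Ht. apply dh1r. lra.
      - intros t Ht. apply Rmult_le_pos; [lra|]. apply Ps. pose proof (Hin t Ht).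
        split; [apply Rmult_le_pos; lra|lra].
      - intros t Ht. apply Pr. lra.
      - rewrite Rmult_0_r, H10r, H10s. lra.
      - intros t Ht Hgap.
        assert (Hw : 0 <= lam * t < s) by (pose proof (Hin t Ht); split; [apply Rmult_le_pos; lra|lra]).
        rewrite Rmult_comm, Heqr by lra.
        replace ((lam * h1 s (lam * t)) ^ m * (lam * (lam * h2 s (lam * t))))
          with (lam ^ S (S m) * (h2 s (lam * t) * h1 s (lam * t) ^ m))
          by (rewrite Rpow_mult_distr; simpl; ring).
        rewrite Heqs by lra. rewrite <- Edel.
        assert (exp (h r t) < exp del * exp (h s (lam * t))).
        { rewrite <- exp_plus. apply exp_increasing. lra. }
        assert (D t <= D (lam * t)) by (apply DP3; [lra|]; replace t with (1 * t) at 1 by ring;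
                                         apply Rmult_le_compat_r; lra).
        assert (0 <= D t) by (apply DP2; lra).
        pose proof (exp_pos (h r t)).
        replace (exp del * (exp (h s (lam * t)) * D (lam * t)))
          with ((exp del * exp (h s (lam * t))) * D (lam * t)) by ring.
        apply Rmult_le_compat; lra.
      - rewrite Rmult_0_r. lra. }
    rewrite Rmult_0_r in C2.
    assert (h s (lam * u) <= h s (lam * r)).
    { apply Ms. apply Rmult_le_pos; lra. apply Rmult_le_compat_l; lra. lra. }
    lra.
  - assert (H1p : 0 < 1) by lra.
    destruct (Hsol 1 H1p) as (dh1_ & dh11 & H101 & Heq1 & Hbl1).
    destruct (SA 1 H1p) as [P1 M1].
    assert (Lim : forall mu, 1 <= mu -> forall r, mu < r -> h r 0 <= h 1 0 - ln (mu ^ S (S m))).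
    { intros mu Hmu r Hmr.
      assert (Hr : 0 < r) by lra.
      destruct (Rle_lt_dec (h r 0) (h 1 0 - ln (mu ^ S (S m)))) as [Hle|Hgt]; [exact Hle|exfalso].
      destruct (Hsol r Hr) as (dhr & dh1r & H10r & Heqr & Hblr).
      destruct (SA r Hr) as [Pr Mr].
      set (L := ln (mu ^ S (S m))).
      assert (Hmp : 0 < mu ^ S (S m)) by (apply pow_lt; lra).
      assert (EL : exp L = mu ^ S (S m)) by (apply exp_ln; exact Hmp).
      destruct (Hbl1 (h r mu + L)) as [d [Hd Hd2]].
      destruct (pick_near 1 d H1p Hd) as [v [Hv1 [Hv2 Hv3]]].
      assert (HK := Hd2 v (conj Hv3 Hv2)).
      set (u := mu * v).
      assert (Hu1 : 0 < u) by (unfold u; apply Rmult_lt_0_compat; lra).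
      assert (Hu2 : u < mu). { unfold u. replace mu with (mu * 1) at 2 by ring. apply Rmult_lt_compat_l; lra. }
      assert (Huv : / mu * u = v) by (unfold u; field; lra).
      assert (Hin : forall t, 0 <= t <= u -> 0 <= / mu * t /\ / mu * t <= t /\ / mu * t < 1).
      { intros t Ht. assert (0 < / mu) by (apply Rinv_0_lt_compat; lra).
        assert (/ mu <= 1) by (rewrite <- Rinv_1; apply Rinv_le_contravar; lra).
        split; [apply Rmult_le_pos; lra|split].
        replace t with (1 * t) at 2 by ring. apply Rmult_le_compat_r; lra.
        assert (Hq : / mu * t <= / mu * u) by (apply Rmult_le_compat_l; lra).
        rewrite Huv in Hq. lra. }
      assert (C := compare (h r) (fun t => h 1 (/ mu * t) + (1 - L)) (h1 r)
        (fun t => / mu * h1 1 (/ mu * t)) (h2 r) (fun t => / mu * (/ mu * h2 1 (/ mu * t))) m u 1).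
      assert (C2 : h r 0 - (h 1 (/ mu * 0) + (1 - L)) <= h r u - (h 1 (/ mu * u) + (1 - L))).
      { apply C; try lra.
        - intros t Ht. apply dhr. lra.
        - intros t Ht. apply dshift. apply dscale. apply dh1_. pose proof (Hin t Ht). lra.
        - intros t Ht. apply dh1r. lra.
        - intros t Ht. apply (derivable_pt_lim_scal (fun t => h1 1 (/ mu * t))).
          apply dscale. apply dh11. pose proof (Hin t Ht). lra.
        - intros t Ht. apply Pr. lra.
        - intros t Ht. apply Rmult_le_pos. left; apply Rinv_0_lt_compat; lra.
          apply P1. pose proof (Hin t Ht). lra.
        - rewrite Rmult_0_r, H101, H10r. lra.
        - intros t Ht Hgap. pose proof (Hin t Ht) as [Hw1 [Hw2 Hw3]].
          rewrite (Rmult_comm (h1 r t ^ m)), Heqr by lra.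
          replace ((/ mu * h1 1 (/ mu * t)) ^ m * (/ mu * (/ mu * h2 1 (/ mu * t))))
            with ((/ mu) ^ S (S m) * (h2 1 (/ mu * t) * h1 1 (/ mu * t) ^ m))
            by (rewrite Rpow_mult_distr; simpl; ring).
          rewrite Heq1 by lra. rewrite pow_inv, <- EL, <- exp_Ropp.
          assert (exp (- L) * exp (h 1 (/ mu * t)) < exp (h r t)).
          { rewrite <- exp_plus. apply exp_increasing. lra. }
          assert (D (/ mu * t) <= D t) by (apply DP3; lra).
          assert (0 <= D (/ mu * t)) by (apply DP2; lra).
          pose proof (exp_pos (- L)). pose proof (exp_pos (h 1 (/ mu * t))).
          replace (exp (- L) * (exp (h 1 (/ mu * t)) * D (/ mu * t)))
            with ((exp (- L) * exp (h 1 (/ mu * t))) * D (/ mu * t)) by ring.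
          apply Rmult_le_compat; try lra. apply Rmult_le_pos; lra.
        - rewrite Rmult_0_r. fold L in Hgt. lra. }
      rewrite Rmult_0_r, Huv in C2. fold L in Hgt.
      assert (h r u <= h r mu) by (apply Mr; lra).
      lra. }
    intros K. set (mu := exp (Rabs (h 1 0) + Rabs K + 1)).
    assert (Hmu : 1 <= mu). { unfold mu. rewrite <- exp_0 at 1. left. apply exp_increasing.
      pose proof (Rabs_pos (h 1 0)). pose proof (Rabs_pos K). lra. }
    exists mu. intros r Hr.
    pose proof (Lim mu Hmu r Hr) as HL.
    rewrite ln_pow in HL by lra. unfold mu in HL. rewrite ln_exp in HL.
    assert (1 <= INR (S (S m))) by (apply (le_INR 1); lia).
    pose proof (Rabs_pos (h 1 0)). pose proof (Rabs_pos K).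
    pose proof (Rle_abs (h 1 0)). pose proof (Rle_abs (- K)). rewrite Rabs_Ropp in *.
    assert (Rabs (h 1 0) + Rabs K + 1 <= INR (S (S m)) * (Rabs (h 1 0) + Rabs K + 1)).
    { replace (Rabs (h 1 0) + Rabs K + 1) with (1 * (Rabs (h 1 0) + Rabs K + 1)) at 1 by ring.
      apply Rmult_le_compat_r; lra. }
    lra.
Qed.
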